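(* Let $\mathcal{K}(\mathbb{X},\tau_{\mathbb{X}})$ be the set of $\tau_{\mathbb{X}}$-compact subsets of $\mathbb{X}=\max(\mathbb{D})$, ordered by reverse inclusion ($C\sqsubseteq C'$ iff $C'\subseteq C$), and let $\mathcal{L}(\mathbb{D})$ be the set of Scott-closed subsets of $\mathbb{D}$, ordered by inclusion. For $d\in\mathbb{D}$ write $\mathord{\uparrow}_{\max}d=\{x\in\max(\mathbb{D}) : d\le x\}$. Define $\gamma:\mathcal{K}(\mathbb{X},\tau_{\mathbb{X}})\to\mathcal{L}(\mathbb{D})$ and $\alpha:\mathcal{L}(\mathbb{D})\to\mathcal{K}(\mathbb{X},\tau_{\mathbb{X}})$ by $\gamma(C)=\{d\in\mathbb{D} : C\subseteq\mathord{\uparrow}_{\max}d\}$ and $\alpha(L)=\bigcap_{d\in L}\mathord{\uparrow}_{\max}d$ (with $\alpha(\emptyset)=\mathbb{X}$). Then these maps are well defined and form a Galois connection with $\alpha$ the upper adjoint of $\gamma$: both are monotone, $L\subseteq\gamma(\alpha(L))$ for all $L\in\mathcal{L}(\mathbb{D})$, and $\alpha(\gamma(C))\sqsubseteq C$ (i.e. $C\subseteq\alpha(\gamma(C))$) for all $C\in\mathcal{K}(\mathbb{X},\tau_{\mathbb{X}})$.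
   Context: Fix a finite set $\mathrm{Act}$ of events. For a dcpo $D$, $K(D)$ denotes its compact elements; a bifinite (SFP) domain is an algebraic dcpo in which, for every finite $F\subseteq K(D)$, the set obtained from $F$ by repeatedly taking sets of minimal upper bounds is finite and contained in $K(D)$, and every upper bound of $F$ lies above a minimal upper bound of $F$. The Scott topology consists of the sets $U$ with $U={\uparrow}(U\cap K(D))$; the Lawson topology is generated by ${\uparrow}k\setminus{\uparrow}l$, $k,l\in K(D)$. The mixed powerdomain $\mathcal{M}(D)$ consists of pairs $(L,U)$ with $L$ Scott-closed, $U$ a Lawson-closed upper set, $L={\downarrow}(L\cap U)$, ordered by $(L,U)\le(L',U')$ iff $L\subseteq L'$ and $U'\subseteq U$. $\mathbb{D}$ is the initial solution over bifinite domains of $\mathbb{D}\cong\prod_{\alpha\in\mathrm{Act}}\mathcal{M}(\mathbb{D})$ (its elements model pointed modal transition systems up to refinement equivalence, maximal elements modelling pointed labelled transition systems up to bisimulation). $\mathbb{X}=\max(\mathbb{D})$ carries the topology $\tau_{\mathbb{X}}=\{U\cap\mathbb{X} : U\text{ Scott-open in }\mathbb{D}\}$. *)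

(* Defs.v *)
From Stdlib Require Import List.
Import ListNotations.
Set Implicit Arguments.

Section Domain.
Variables (D : Type) (le : D -> D -> Prop).

Definition is_poset : Prop :=
  (forall x, le x x) /\ (forall x y z, le x y -> le y z -> le x z) /\
  (forall x y, le x y -> le y x -> x = y).

Definition upper_bound (S : D -> Prop) (u : D) : Prop := forall s, S s -> le s u.
Definition is_lub (S : D -> Prop) (u : D) : Prop :=
  upper_bound S u /\ forall v, upper_bound S v -> le u v.
Definition directed (S : D -> Prop) : Prop :=
  (exists s, S s) /\ forall x y, S x -> S y -> exists z, S z /\ le x z /\ le y z.
Definition is_dcpo : Prop := is_poset /\ forall S, directed S -> exists u, is_lub S u.

Definition compact (k : D) : Prop :=
  forall S u, directed S -> is_lub S u -> le k u -> exists s, S s /\ le k s.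

Definition algebraic : Prop :=
  is_dcpo /\ forall x, directed (fun k => compact k /\ le k x) /\
                       is_lub (fun k => compact k /\ le k x) x.

Definition upset (S : D -> Prop) (x : D) : Prop := exists s, S s /\ le s x.
Definition downset (S : D -> Prop) (x : D) : Prop := exists s, S s /\ le x s.

Definition mub (F : list D) (m : D) : Prop :=
  upper_bound (fun x => In x F) m /\
  forall m', upper_bound (fun x => In x F) m' -> le m' m -> m' = m.

Inductive mub_closure (F : list D) : D -> Prop :=
 | mc_base x : In x F -> mub_closure F x
 | mc_step (G : list D) m : (forall g, In g G -> mub_closure F g) -> mub G m ->
     mub_closure F m.

Definition bifinite : Prop :=
  algebraic /\
  forall F : list D, (forall k, In k F -> compact k) ->
    (exists l : list D, forall x, mub_closure F x <-> In x l) /\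
    (forall x, mub_closure F x -> compact x) /\
    (forall u, upper_bound (fun x => In x F) u -> exists m, mub F m /\ le m u).

Definition scott_open (U : D -> Prop) : Prop :=
  forall x, U x <-> exists k, U k /\ compact k /\ le k x.
Definition scott_closed (L : D -> Prop) : Prop := scott_open (fun x => ~ L x).

(* Lawson topology: generated by the sets up k and D \ up l, k, l compact
   (basic opens  up k1 /\ ... /\ up km \ (up l1 \/ ... \/ up ln)) *)
Definition lawson_open (O : D -> Prop) : Prop :=
  forall x, O x -> exists ks ls : list D,
    (forall k, In k ks -> compact k /\ le k x) /\
    (forall l, In l ls -> compact l /\ ~ le l x) /\
    (forall y, (forall k, In k ks -> le k y) -> (forall l, In l ls -> ~ le l y) -> O y).
Definition lawson_closed (U : D -> Prop) : Prop := lawson_open (fun x => ~ U x).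

Definition mixed_pair (p : (D -> Prop) * (D -> Prop)) : Prop :=
  scott_closed (fst p) /\ lawson_closed (snd p) /\
  (forall x y, snd p x -> le x y -> snd p y) /\
  (forall x, fst p x <-> downset (fun y => fst p y /\ snd p y) x).

Definition MD : Type := { p : (D -> Prop) * (D -> Prop) | mixed_pair p }.

Definition MD_le (a b : MD) : Prop :=
  (forall x, fst (proj1_sig a) x -> fst (proj1_sig b) x) /\
  (forall x, snd (proj1_sig b) x -> snd (proj1_sig a) x).

Definition scott_closure (S : D -> Prop) (x : D) : Prop :=
  forall L, scott_closed L -> (forall s, S s -> L s) -> L x.
Definition image (f : D -> D) (S : D -> Prop) (y : D) : Prop := exists x, S x /\ y = f x.
Definition Mmap (f : D -> D) (p : (D -> Prop) * (D -> Prop)) : (D -> Prop) * (D -> Prop) :=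
  (scott_closure (image f (fst p)), upset (image f (snd p))).

Definition maximal (x : D) : Prop := forall y, le x y -> y = x.
Definition upmax (d : D) (x : D) : Prop := maximal x /\ le d x.

(* compactness in tau_X = { U /\ X | U Scott-open } *)
Definition tauX_compact (C : D -> Prop) : Prop :=
  forall (I : Type) (U : I -> D -> Prop), (forall i, scott_open (U i)) ->
    (forall x, C x -> exists i, U i x) ->
    exists l : list I, forall x, C x -> exists i, In i l /\ U i x.

Definition KX (C : D -> Prop) : Prop := (forall x, C x -> maximal x) /\ tauX_compact C.
Definition LD (L : D -> Prop) : Prop := scott_closed L.

Definition gammaC (C : D -> Prop) (d : D) : Prop := forall x, C x -> upmax d x.
Definition alphaL (L : D -> Prop) (x : D) : Prop := maximal x /\ forall d, L d -> upmax d x.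

End Domain.

(* D (with order le and phi : D -> prod_{a in Act} M(D)) is the initial solution of
   D = prod_{a in Act} M(D) over bifinite domains, expressed by the minimal-invariant
   characterization: phi is an order isomorphism, and id_D is the sup of the chain of
   deflations p_0 = const bot, p_{n+1} = phi^{-1} o (prod_a M(p_n)) o phi. *)
Definition initial_solution (Act D : Type) (le : D -> D -> Prop) (phi : D -> Act -> MD le) : Prop :=
  bifinite le /\
  (forall x y, le x y <-> forall a, MD_le (phi x a) (phi y a)) /\
  (forall m : Act -> MD le, exists x, forall a, MD_le (phi x a) (m a) /\ MD_le (m a) (phi x a)) /\
  exists (bot : D) (p : nat -> D -> D),
    (forall x, le bot x) /\
    (forall x, p 0 x = bot) /\
    (forall n x a z,
       (fst (proj1_sig (phi (p (S n) x) a)) z <-> fst (Mmap le (p n) (proj1_sig (phi x a))) z) /\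
       (snd (proj1_sig (phi (p (S n) x) a)) z <-> snd (Mmap le (p n) (proj1_sig (phi x a))) z)) /\
    (forall x, is_lub le (fun y => exists n, y = p n x) x).

(* Main.v *)
Require Import Defs.
From Stdlib Require Import List Classical ClassicalEpsilon Arith Lia.
From mathcomp Require boolp classical_sets.
Import ListNotations.

Section Main.
Variables (Act : Type) (D : Type) (le : D -> D -> Prop) (phi : D -> Act -> MD le).
Variable la : list Act.
Hypothesis Hla : forall a, In a la.
Hypothesis bif : bifinite le.
Hypothesis Hiso : forall x y, le x y <-> forall a, MD_le (phi x a) (phi y a).
Hypothesis Hsurj : forall m : Act -> MD le, exists x, forall a, MD_le (phi x a) (m a) /\ MD_le (m a) (phi x a).
Variables (bot : D) (p : nat -> D -> D).
Hypothesis Hbot : forall x, le bot x.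
Hypothesis Hp0 : forall x, p 0 x = bot.
Hypothesis HpS : forall n x a z,
       (fst (proj1_sig (phi (p (S n) x) a)) z <-> fst (Mmap le (p n) (proj1_sig (phi x a))) z) /\
       (snd (proj1_sig (phi (p (S n) x) a)) z <-> snd (Mmap le (p n) (proj1_sig (phi x a))) z).
Hypothesis Hlub : forall x, is_lub le (fun y => exists n, y = p n x) x.

Lemma le_refl x : le x x.
Proof. destruct bif as [[[[H _] _] _] _]. apply H. Qed.
Lemma le_trans x y z : le x y -> le y z -> le x z.
Proof. destruct bif as [[[[_ [H _]] _] _] _]. apply H. Qed.
Lemma le_anti x y : le x y -> le y x -> x = y.
Proof. destruct bif as [[[[_ [_ H]] _] _] _]. apply H. Qed.
Lemma dcpo S : directed le S -> exists u, is_lub le S u.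
Proof. destruct bif as [[[_ H] _] _]. apply H. Qed.
Lemma alg x : directed le (fun k => compact le k /\ le k x) /\ is_lub le (fun k => compact le k /\ le k x) x.
Proof. destruct bif as [[_ H] _]. apply H. Qed.

Lemma lub_unique S u v : is_lub le S u -> is_lub le S v -> u = v.
Proof. intros [H1 H2] [H3 H4]. apply le_anti; auto. Qed.

Lemma so_upper U x y : scott_open le U -> U x -> le x y -> U y.
Proof. intros HU Ux Hxy. apply HU in Ux. destruct Ux as [k [Uk [Ck Hk]]].
  apply HU. exists k. split; [auto|split; [auto|eapply le_trans; eauto]]. Qed.

Lemma sc_down L x y : scott_closed le L -> L y -> le x y -> L x.
Proof. intros HL Ly Hxy. apply NNPP. intro Nx. apply (so_upper _ _ _ HL Nx Hxy Ly). Qed.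

Lemma alg_sep x y : ~ le x y -> exists k, compact le k /\ le k x /\ ~ le k y.
Proof. intro H. apply NNPP. intro H'. apply H. destruct (alg x) as [_ [_ Hl]].
  apply Hl. intros k [Ck Hk]. apply NNPP. intro N. apply H'. exists k; auto. Qed.

Lemma alg_bound x F : (forall k, In k F -> le k x /\ compact le k) ->
  exists k, compact le k /\ le k x /\ forall k', In k' F -> le k' k.
Proof. intro H. destruct (alg x) as [[[k0 Hk0] Hd] _]. induction F as [|a F IH].
  - exists k0. destruct Hk0. split; auto. split; auto. intros k' [].
  - destruct IH as [k [Ck [Hk Hall]]]. intros; apply H; simpl; auto.
    destruct (H a (or_introl eq_refl)) as [Ha Ca].
    destruct (Hd k a) as [z [[Cz Hz] [Hkz Haz]]]; auto.
    exists z. split; auto. split; auto. intros k' [<-|Hin]; auto.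
    eapply le_trans; eauto. Qed.

Lemma sc_dirsup L S u : scott_closed le L -> directed le S -> (forall s, S s -> L s) -> is_lub le S u -> L u.
Proof. intros HL HS HSL Hu. apply NNPP. intro Nu. apply HL in Nu.
  destruct Nu as [k [Nk [Ck Hk]]]. destruct (Ck S u HS Hu Hk) as [s [Ss Hks]].
  apply Nk. eapply sc_down; eauto. Qed.

Lemma filter_ex (P : D -> Prop) (l : list D) : exists F, forall c, In c F <-> In c l /\ P c.
Proof. induction l as [|a l [F HF]].
  - exists []. simpl. tauto.
  - destruct (classic (P a)).
    + exists (a :: F). intro c. simpl. rewrite HF. split; [intros [<-|[? ?]]|intros [[<-|?] ?]]; auto.
    + exists F. intro c. simpl. rewrite HF. split; [intros [? ?]; auto|intros [[<-|?] ?]; tauto].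
Qed.

Lemma down_list_closed F : scott_closed le (fun y => exists c, In c F /\ le y c).
Proof. intro x. split.
  - intro Nx.
    assert (Hs : forall c, In c F -> exists k, compact le k /\ le k x /\ ~ le k c).
    { intros c Hc. apply alg_sep. intro. apply Nx. eauto. }
    assert (Hks : exists ks, (forall k, In k ks -> le k x /\ compact le k) /\
             forall c, In c F -> exists k, In k ks /\ ~ le k c).
    { clear Nx. induction F as [|a F IH].
      - exists []. split; intros ? [].
      - destruct IH as [ks [H1 H2]]. intros; apply Hs; simpl; auto.
        destruct (Hs a (or_introl eq_refl)) as [k [Ck [Hk Nk]]].
        exists (k :: ks). split.
        + intros k' [<-|Hin]; auto.
        + intros c [<-|Hc]. exists k; simpl; auto. destruct (H2 c Hc) as [k' [? ?]]. exists k'; simpl; auto. }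
    destruct Hks as [ks [H1 H2]]. destruct (alg_bound x ks H1) as [k [Ck [Hk Hall]]].
    exists k. split; [|auto]. intros [c [Hc Hkc]]. destruct (H2 c Hc) as [k' [Hk' Nk']].
    apply Nk'. eapply le_trans; eauto.
  - intros [k [Nk [Ck Hk]]] [c [Hc Hxc]]. apply Nk. exists c. split; auto. eapply le_trans; eauto.
Qed.

Definition Fs x a := fst (proj1_sig (phi x a)).
Definition Sn x a := snd (proj1_sig (phi x a)).
Notation cl := (scott_closure le).

Lemma HF n x a z : Fs (p (S n) x) a z <-> cl (image (p n) (Fs x a)) z.
Proof. apply (HpS n x a z). Qed.
Lemma HSn n x a z : Sn (p (S n) x) a z <-> upset le (image (p n) (Sn x a)) z.
Proof. apply (HpS n x a z). Qed.

Lemma cl_in S s : S s -> cl S s.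
Proof. intros Hs L _ HL. auto. Qed.
Lemma cl_min S L x : scott_closed le L -> (forall s, S s -> L s) -> cl S x -> L x.
Proof. intros HL HS H. apply H; auto. Qed.
Lemma cl_closed S : scott_closed le (cl S).
Proof. intro x. split.
  - intro N. apply NNPP. intro N2. apply N. intros L HL HSL. apply NNPP. intro NL.
    apply HL in NL. destruct NL as [k [Nk [Ck Hk]]]. apply N2. exists k. split; [|split; auto].
    intro Hk'. apply Nk. apply Hk'; auto.
  - intros [k [Nk [Ck Hk]]] Hx. apply Nk. intros L HL HSL. eapply sc_down; [exact HL| |exact Hk]. apply Hx; auto.
Qed.
Lemma cl_mono S S' z : (forall s, S s -> cl S' s) -> cl S z -> cl S' z.
Proof. intros H Hz. apply (cl_min S (cl S') z (cl_closed S') H Hz). Qed.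
Lemma cl_down S x y : cl S y -> le x y -> cl S x.
Proof. intros. eapply sc_down; eauto. apply cl_closed. Qed.
Lemma cl_sub_down S l z : (forall y, S y -> In y l) -> cl S z -> exists c, S c /\ le z c.
Proof. intros Hl Hz. destruct (filter_ex S l) as [F HF].
  assert (H : exists c, In c F /\ le z c).
  { apply (cl_min S (fun y => exists c, In c F /\ le y c) z (down_list_closed F)); [|exact Hz]. intros s Ss. exists s.
    split; [apply HF; auto|apply le_refl]. }
  destruct H as [c [Hc Hzc]]. apply HF in Hc. exists c; tauto. Qed.

Lemma le_char x y : le x y <-> forall a, (forall z, Fs x a z -> Fs y a z) /\ (forall z, Sn y a z -> Sn x a z).
Proof. apply Hiso. Qed.

Lemma mp x a : mixed_pair le (proj1_sig (phi x a)).
Proof. apply proj2_sig. Qed.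
Lemma Fs_closed x a : scott_closed le (Fs x a).
Proof. apply (mp x a). Qed.
Lemma Sn_up x a y z : Sn x a y -> le y z -> Sn x a z.
Proof. apply (mp x a). Qed.
Lemma Fs_dn x a y : Fs x a y <-> exists e, (Fs x a e /\ Sn x a e) /\ le y e.
Proof. apply (mp x a). Qed.

Lemma pdefl n x : le (p n x) x.
Proof. apply (Hlub x). eauto. Qed.

Lemma pmono n : forall x y, le x y -> le (p n x) (p n y).
Proof. induction n as [|n IH]; intros x y H.
  - rewrite !Hp0. apply le_refl.
  - apply le_char. intro a. rewrite le_char in H. destruct (H a) as [H1 H2]. split.
    + intros z Hz. apply HF in Hz. apply HF. revert Hz; apply cl_mono.
      intros s [w [Hw ->]]. apply cl_in. exists w; auto.
    + intros z Hz. apply HSn in Hz. apply HSn. destruct Hz as [s [[w [Hw ->]] Hs]].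
      exists (p n w). split; auto. exists w; auto.
Qed.

Lemma fin_gen {K : Type} (Q : D -> K -> Prop) (f : D -> D) (keys : list K) :
  forall R : D -> Prop, (forall x y, R x -> R y -> (forall k, In k keys -> (Q x k <-> Q y k)) -> f x = f y) ->
  exists l, forall x, R x -> In (f x) l.
Proof. induction keys as [|k keys IH]; intros R HR.
  - destruct (classic (exists x0, R x0)) as [[x0 Hx0]|N].
    + exists [f x0]. intros x Hx. left. symmetry. apply HR; auto. intros ? [].
    + exists []. intros x Hx. exfalso. eauto.
  - destruct (IH (fun x => R x /\ Q x k)) as [l1 H1].
    { intros x y [Rx Qx] [Ry Qy] Hk. apply HR; auto. intros k' [<-|Hk']; [tauto|auto]. }
    destruct (IH (fun x => R x /\ ~ Q x k)) as [l2 H2].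
    { intros x y [Rx Qx] [Ry Qy] Hk. apply HR; auto. intros k' [<-|Hk']; [tauto|auto]. }
    exists (l1 ++ l2). intros x Hx. apply in_or_app. destruct (classic (Q x k)); auto.
Qed.

Lemma pfin n : exists l, forall x, In (p n x) l.
Proof. induction n as [|n [ln Hln]].
  - exists [bot]. intro. rewrite Hp0. left; auto.
  - set (Q := fun x (k : (Act * D) * bool) => let '((a, c), b) := k in
          if b then cl (image (p n) (Fs x a)) c else upset le (image (p n) (Sn x a)) c).
    assert (Hdir : forall x y, (forall k, In k (list_prod (list_prod la ln) [true; false]) -> (Q x k <-> Q y k)) ->
               le (p (S n) x) (p (S n) y)).
    { intros x y Hk. apply le_char. intro a. split.
      - intros z0 Hz. apply HF in Hz. apply HF. revert Hz; apply cl_mono.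
        intros s [w [Hw ->]].
        assert (Hin : In ((a, p n w), true) (list_prod (list_prod la ln) [true; false]))
          by (apply in_prod; [apply in_prod; auto|simpl; auto]).
        apply (proj1 (Hk _ Hin)). simpl. apply cl_in. exists w; auto.
      - intros z0 Hz. apply HSn in Hz. apply HSn. destruct Hz as [s [[w [Hw ->]] Hs]].
        assert (Hq : Q x ((a, p n w), false)).
        { assert (Hin : In ((a, p n w), false) (list_prod (list_prod la ln) [true; false]))
            by (apply in_prod; [apply in_prod; auto|simpl; auto]).
          apply (proj2 (Hk _ Hin)). simpl. exists (p n w). split; [exists w; auto|apply le_refl]. }
        simpl in Hq. destruct Hq as [s' [Hs' Hle]]. exists s'. split; auto. eapply le_trans; eauto. }
    destruct (fin_gen Q (p (S n)) (list_prod (list_prod la ln) [true; false]) (fun _ => True)) as [l Hl].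
    + intros x y _ _ Hk. apply le_anti; apply Hdir; auto. intros k Hk'. symmetry. auto.
    + exists l. intro x. apply Hl. auto.
Qed.

Lemma pcomp m : forall n, m <= n -> forall x, p m (p n x) = p m x.
Proof. induction m as [|m IH]; intros n Hn x.
  - rewrite !Hp0. reflexivity.
  - destruct n as [|n']; [lia|]. assert (Hm : m <= n') by lia.
    destruct (pfin n') as [ln Hln].
    assert (EF : forall a z, Fs (p (S m) (p (S n') x)) a z <-> Fs (p (S m) x) a z).
    { intros a z. rewrite !HF. split; apply cl_mono.
      - intros s [y [Hy ->]]. apply HF in Hy.
        assert (Himg : forall c, image (p n') (Fs x a) c -> In c ln) by (intros c [l [_ ->]]; auto).
        destruct (cl_sub_down _ ln _ Himg Hy) as [c [[l [Hl ->]] Hyc]].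
        apply (cl_down _ _ (p m l)). apply cl_in. exists l; auto.
        rewrite <- (IH n' Hm l). apply pmono. auto.
      - intros s [l [Hl ->]]. rewrite <- (IH n' Hm l). apply cl_in. exists (p n' l). split; auto.
        apply HF. apply cl_in. exists l; auto. }
    assert (ES : forall a z, Sn (p (S m) (p (S n') x)) a z <-> Sn (p (S m) x) a z).
    { intros a z. rewrite !HSn. split.
      - intros [s [[y [Hy ->]] Hz]]. apply HSn in Hy. destruct Hy as [s' [[u [Hu ->]] Hu']].
        exists (p m u). split. exists u; auto. eapply le_trans; [|exact Hz].
        rewrite <- (IH n' Hm u). apply pmono. auto.
      - intros [s [[u [Hu ->]] Hz]]. exists (p m (p n' u)). split.
        + exists (p n' u). split; auto. apply HSn. exists (p n' u). split; [exists u; auto|apply le_refl].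
        + rewrite (IH n' Hm u). auto. }
    apply le_anti; apply le_char; intro a; split; intros z Hz.
    + apply EF; exact Hz.
    + apply ES; exact Hz.
    + apply EF; exact Hz.
    + apply ES; exact Hz.
Qed.

Lemma pidem n x : p n (p n x) = p n x.
Proof. apply pcomp. lia. Qed.

Lemma pchain k m x : k <= m -> le (p k x) (p m x).
Proof. intro H. rewrite <- (pcomp k m H x). apply pdefl. Qed.

Lemma MD_le_trans (q1 q2 q3 : MD le) : MD_le q1 q2 -> MD_le q2 q3 -> MD_le q1 q3.
Proof. intros [H1 H2] [H3 H4]. split; auto. Qed.

Definition MDmax (q : MD le) := forall m, MD_le q m -> MD_le m q.

Lemma phi_max x a : maximal le x -> MDmax (phi x a).
Proof. intros Hx m Hm.
  set (mm := fun b => if excluded_middle_informative (b = a) then m else phi x b).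
  destruct (Hsurj mm) as [x' Hx'].
  assert (Hle : le x x').
  { apply Hiso. intro b. destruct (Hx' b) as [H1 H2]. unfold mm in H1, H2.
    destruct (excluded_middle_informative (b = a)) as [->|Nb].
    - eapply MD_le_trans; eauto. 
    - split; intros z Hz. apply H2; auto. apply H2; auto. }
  apply Hx in Hle. subst x'. destruct (Hx' a) as [_ H2]. unfold mm in H2.
  destruct (excluded_middle_informative (a = a)) as [_|N]; [auto|congruence].
Qed.

Lemma asbT (P : Prop) : P -> boolp.asbool P = true.
Proof. intro H. apply (ssrbool.introT (boolp.asboolP P)). exact H. Qed.
Lemma asbW (P : Prop) : boolp.asbool P = true -> P.
Proof. apply boolp.asboolW. Qed.

Lemma mixed_add (L U : D -> Prop) z : mixed_pair le (L, U) -> U z ->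
  mixed_pair le (fun y => L y \/ le y z, U).
Proof. intros [HLc [HUl [HUup HLd]]] Uz. simpl in *. split; [|split; [exact HUl|split; [exact HUup|]]]; simpl.
  - intro y. split.
    + intro N. assert (N1 : ~ L y) by tauto. assert (N2 : ~ le y z) by tauto.
      apply HLc in N1. destruct N1 as [k1 [Nk1 [Ck1 Hk1]]].
      destruct (alg_sep _ _ N2) as [k2 [Ck2 [Hk2 Nk2]]].
      destruct (alg_bound y [k1; k2]) as [k [Ck [Hk Hall]]].
      { intros k' [<-|[<-|[]]]; auto. }
      exists k. split; [|auto]. intros [Lk|Lk].
      * apply Nk1. eapply sc_down; eauto. apply Hall; simpl; auto.
      * apply Nk2. eapply le_trans; [apply Hall; simpl; auto|exact Lk].
    + intros [k [Nk [Ck Hk]]] [Ly|Ly]; apply Nk.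
      * left. eapply sc_down; eauto.
      * right. eapply le_trans; eauto.
  - intro y. split.
    + intros [Ly|Ly].
      * apply HLd in Ly. destruct Ly as [e [[Le Ue] Hye]]. exists e. split; auto.
      * exists z. split; [split; [right; apply le_refl|auto]|auto].
    + intros [e [[[Le|Le] Ue] Hye]].
      * left. eapply sc_down; eauto.
      * right. eapply le_trans; eauto.
Qed.

Lemma zorn_max (q : MD le) : MDmax q -> forall l, fst (proj1_sig q) l ->
  exists s, fst (proj1_sig q) s /\ snd (proj1_sig q) s /\ maximal le s /\ le l s.
Proof. intros Hq l Hl.
  pose proof (proj2_sig q) as Hmp.
  destruct q as [[L U] Hmp0]. simpl in *.
  destruct Hmp as [HLc [HUl [HUup HLd]]]. simpl in *.
  apply HLd in Hl. destruct Hl as [e [[Le Ue] Hle]].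
  set (T := {y : D | L y /\ U y /\ le e y}).
  set (t0 := exist (fun y => L y /\ U y /\ le e y) e (conj Le (conj Ue (le_refl e))) : T).
  set (R := fun s t : T => boolp.asbool (le (proj1_sig s) (proj1_sig t))).
  destruct (@classical_sets.ZL_preorder T t0 R) as [t Ht].
  - intro s. apply asbT. apply le_refl.
  - intros r s t Hrs Hst. apply asbT. eapply le_trans; apply asbW; eauto.
  - intros A HA. destruct (classic (exists s0, A s0)) as [[s0 Hs0]|N].
    + set (S' := fun y => exists s, A s /\ y = proj1_sig s).
      assert (Hdir : directed le S').
      { split. exists (proj1_sig s0). exists s0; auto.
        intros x y [s [Hs ->]] [t [Ht ->]]. destruct (HA s t Hs Ht) as [H|H]; apply asbW in H.
        - exists (proj1_sig t). split. exists t; auto. split; auto. apply le_refl.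
        - exists (proj1_sig s). split. exists s; auto. split; auto. apply le_refl. }
      destruct (dcpo S' Hdir) as [u Hu].
      assert (Hs0u : le (proj1_sig s0) u) by (apply Hu; exists s0; auto).
      assert (Lu : L u).
      { apply (sc_dirsup L S' u HLc Hdir); auto. intros y [s [_ ->]]. apply (proj2_sig s). }
      assert (Uu : U u) by (apply (HUup (proj1_sig s0)); auto; apply (proj2_sig s0)).
      assert (eu : le e u) by (eapply le_trans; [apply (proj2_sig s0)|exact Hs0u]).
      exists (exist _ u (conj Lu (conj Uu eu))). intros s Hs. apply asbT. simpl. apply Hu. exists s; auto.
    + exists t0. intros s Hs. exfalso. eauto.
  - exists (proj1_sig t). destruct t as [t [Lt [Ut et]]]. simpl.
    split; auto. split; auto. split; [|eapply le_trans; eauto].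
    intros z Hz.
    assert (Uz : U z) by (eapply HUup; eauto).
    set (m := exist (mixed_pair le) (fun y => L y \/ le y z, U) (mixed_add L U z Hmp0 Uz) : MD le).
    assert (Hqm : MD_le (exist (mixed_pair le) (L, U) Hmp0) m).
    { split; simpl; auto. }
    apply Hq in Hqm. destruct Hqm as [H1 _]. simpl in H1.
    assert (Lz : L z) by (apply H1; right; apply le_refl).
    assert (ez : le e z) by (eapply le_trans; eauto).
    specialize (Ht (exist _ z (conj Lz (conj Uz ez)))).
    assert (H2 : R (exist _ t (conj Lt (conj Ut et))) (exist _ z (conj Lz (conj Uz ez))) = true) by (apply asbT; exact Hz).
    apply Ht in H2. apply asbW in H2. simpl in H2. apply le_anti; auto.
Qed.

Lemma sep_list x F : (forall c, In c F -> ~ le c x) -> exists ls,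
  (forall k, In k ls -> compact le k /\ ~ le k x) /\ forall c, In c F -> exists k, In k ls /\ le k c.
Proof. induction F as [|a F IH]; intro H.
  - exists []. split; intros ? [].
  - destruct IH as [ls [H1 H2]]. intros; apply H; simpl; auto.
    destruct (alg_sep a x) as [k [Ck [Hka Nk]]]. apply H; simpl; auto.
    exists (k :: ls). split.
    + intros k' [<-|Hk']; auto.
    + intros c [<-|Hc]. exists k; simpl; auto. destruct (H2 c Hc) as [k' [? ?]]. exists k'; simpl; auto.
Qed.

Lemma levelA (q : MD le) n : MDmax q -> forall u, snd (proj1_sig q) u ->
  exists s, fst (proj1_sig q) s /\ snd (proj1_sig q) s /\ maximal le s /\ le (p n s) u.
Proof. intros Hq.
  pose proof (zorn_max q Hq) as HZ.
  pose proof (proj2_sig q) as Hmp.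
  destruct q as [[L U] Hmp0]. simpl in *.
  destruct Hmp as [HLc [HUl [HUup HLd]]]. simpl in *.
  set (V := fun y => exists s, L s /\ U s /\ maximal le s /\ le (p n s) y).
  assert (Hm : mixed_pair le (L, fun y => U y /\ V y)).
  { unfold V. split; [exact HLc|split; [|split]]; simpl.
    - intros x Nx. destruct (classic (U x)) as [Ux|Nux].
      + assert (NV : ~ V x) by tauto.
        destruct (pfin n) as [ln Hln].
        destruct (filter_ex (fun c => exists s, L s /\ U s /\ maximal le s /\ c = p n s) ln) as [F HF].
        destruct (sep_list x F) as [ls [H1 H2]].
        { intros c Hc Hcx. apply HF in Hc. destruct Hc as [_ [s [Ls [Us [Ms ->]]]]]. apply NV. exists s; auto. }
        exists [], ls. split; [intros ? []|split; [auto|]].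
        intros y _ Hy [Uy [s [Ls [Us [Ms Hs]]]]].
        assert (Hc : In (p n s) F) by (apply HF; split; [auto|exists s; auto]).
        destruct (H2 _ Hc) as [k [Hk Hkc]]. apply (Hy k Hk). eapply le_trans; eauto.
      + destruct (HUl x Nux) as [ks [ls [H1 [H2 H3]]]]. exists ks, ls. split; auto. split; auto.
        intros y Hy1 Hy2 [Uy _]. apply (H3 y Hy1 Hy2 Uy).
    - intros x y [Ux [s [Ls [Us [Ms Hs]]]]] Hxy. split; [eapply HUup; [exact Ux|exact Hxy]|].
      exists s. split; auto. split; auto. split; auto. eapply le_trans; eauto.
    - intro y. split.
      + intro Ly. destruct (HZ y Ly) as [s [Ls [Us [Ms Hys]]]]. exists s. split; auto.
        split; auto. split; auto. exists s. split; auto. split; auto. split; auto. apply pdefl.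
      + intros [e [[Le _] Hye]]. eapply sc_down; eauto. }
  set (m := exist (mixed_pair le) (L, fun y => U y /\ V y) Hm : MD le).
  assert (Hqm : MD_le (exist (mixed_pair le) (L, U) Hmp0) m) by (split; simpl; [auto|tauto]).
  apply Hq in Hqm. destruct Hqm as [_ H2]. simpl in H2.
  intros u Uu. apply H2 in Uu. destruct Uu as [_ Vu]. exact Vu.
Qed.

Lemma star n : forall x w, maximal le x -> le (p n x) (p n w) -> p n x = p n w.
Proof. induction n as [|n IH]; intros x w Mx Hxw.
  - rewrite !Hp0; auto.
  - apply le_anti; auto. apply le_char. intro a.
    pose proof (phi_max x a Mx) as Hq.
    rewrite le_char in Hxw. destruct (Hxw a) as [H1 H2].
    destruct (pfin n) as [ln Hln].
    split.
    + intros z Hz. apply HF in Hz. apply HF. revert Hz. apply cl_mono.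
      intros y [l' [Hl' ->]]. apply Fs_dn in Hl'. destruct Hl' as [e' [[Le' Ue'] Hle']].
      assert (Hu : Sn (p (S n) w) a (p n e')).
      { apply HSn. exists (p n e'). split; [exists e'; auto|apply le_refl]. }
      apply H2 in Hu. apply HSn in Hu. destruct Hu as [y [[u [Uu ->]] Hue]].
      destruct (levelA (phi x a) n Hq u Uu) as [s [Ls [Us [Ms Hsu]]]].
      assert (Hse : le (p n s) (p n e')).
      { eapply le_trans; [|exact Hue]. rewrite <- (pidem n s). apply pmono. auto. }
      apply IH in Hse; auto.
      apply (cl_down _ _ (p n s)). apply cl_in. exists s; auto.
      rewrite Hse. apply pmono. auto.
    + intros z Hz. apply HSn in Hz. apply HSn. destruct Hz as [y [[u [Uu ->]] Hz]].
      destruct (levelA (phi x a) n Hq u Uu) as [s [Ls [Us [Ms Hsu]]]].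
      assert (Hs1 : Fs (p (S n) x) a (p n s)) by (apply HF; apply cl_in; exists s; auto).
      apply H1 in Hs1. apply HF in Hs1.
      assert (Himg : forall c, image (p n) (Fs w a) c -> In c ln) by (intros c [l [_ ->]]; auto).
      destruct (cl_sub_down _ ln _ Himg Hs1) as [c [[l' [Hl' ->]] Hsc]].
      apply Fs_dn in Hl'. destruct Hl' as [e' [[Le' Ue'] Hle']].
      assert (Hse : le (p n s) (p n e')) by (eapply le_trans; [exact Hsc|apply pmono; auto]).
      apply IH in Hse; auto.
      exists (p n e'). split; [exists e'; auto|].
      rewrite <- Hse. eapply le_trans; [|exact Hz]. rewrite <- (pidem n s). apply pmono. auto.
Qed.

Lemma choose_list {I : Type} (P : D -> I -> Prop) F : (forall c, In c F -> exists i, P c i) ->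
  exists li, forall c, In c F -> exists i, In i li /\ P c i.
Proof. induction F as [|a F IH]; intro H.
  - exists []. intros ? [].
  - destruct IH as [li Hli]. intros; apply H; simpl; auto.
    destruct (H a (or_introl eq_refl)) as [i Hi]. exists (i :: li).
    intros c [<-|Hc]. exists i; simpl; auto. destruct (Hli c Hc) as [j [? ?]]. exists j; simpl; auto.
Qed.

Lemma alpha_compact L : scott_closed le L -> tauX_compact le (alphaL le L).
Proof.
  intros HL I Uf HU Hcov.
  set (A := alphaL le L).
  set (Bad := fun m x => forall i, ~ Uf i (p m x)).
  assert (Bad_mono : forall k m x, k <= m -> Bad m x -> Bad k x).
  { intros k m x Hkm HB i Hi. apply (HB i). eapply so_upper; [apply HU|exact Hi|apply pchain; auto]. }
  assert (Claim : exists n, forall x, A x -> exists i, Uf i (p n x)).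
  { apply NNPP. intro Nc.
    assert (H : forall n, exists x, A x /\ Bad n x).
    { intro n. apply NNPP. intro N. apply Nc. exists n. intros x Ax. apply NNPP. intro N2.
      apply N. exists x. split; auto. intros i Hi. apply N2. eauto. }
    set (BI := fun n c => forall m, n <= m -> exists x, A x /\ p n x = c /\ Bad m x).
    assert (BI0 : BI 0 bot).
    { intros m _. destruct (H m) as [x [Ax Bx]]. exists x. rewrite Hp0. auto. }
    assert (step : forall n c, BI n c -> exists c', BI (S n) c' /\ p n c' = c).
    { intros n c Hc. apply NNPP. intro N.
      assert (HM : forall l : list D, exists M, S n <= M /\ forall c', In c' l -> p n c' = c ->
                 ~ exists x, A x /\ p (S n) x = c' /\ Bad M x).
      { induction l as [|a l [M1 [HM1 HM1']]].
        - exists (S n). split; [auto|intros ? []].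
        - destruct (classic (p n a = c)) as [Ea|Na].
          + assert (NB : ~ BI (S n) a) by (intro; apply N; exists a; auto).
            assert (Hm : exists m, S n <= m /\ ~ exists x, A x /\ p (S n) x = a /\ Bad m x).
            { apply NNPP. intro N3. apply NB. intros m Hm. apply NNPP. intro N4. apply N3. exists m. auto. }
            destruct Hm as [m [Hm Hm']].
            exists (Nat.max M1 m). split; [lia|]. intros c' [<-|Hc'] Ec' [x [Ax [Ex Bx]]].
            * apply Hm'. exists x. split; auto. split; auto. eapply Bad_mono; [|exact Bx]. lia.
            * apply (HM1' c' Hc' Ec'). exists x. split; auto. split; auto. eapply Bad_mono; [|exact Bx]. lia.
          + exists M1. split; auto. intros c' [<-|Hc'] Ec'; [congruence|]. auto. }
      destruct (pfin (S n)) as [l Hl]. destruct (HM l) as [M [HM1 HM2]].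
      destruct (Hc M ltac:(lia)) as [x [Ax [Ex Bx]]].
      apply (HM2 (p (S n) x) (Hl x)).
      + rewrite pcomp by lia. auto.
      + exists x. auto. }
    assert (stepf : forall n (c : {c | BI n c}), {c' | BI (S n) c' /\ p n c' = proj1_sig c}).
    { intros n [c Hc]. apply constructive_indefinite_description. apply step. auto. }
    set (vs := nat_rect (fun n => {c | BI n c}) (exist _ bot BI0)
                 (fun n c => exist _ (proj1_sig (stepf n c)) (proj1 (proj2_sig (stepf n c))))).
    set (v := fun n => proj1_sig (vs n)).
    assert (Hv : forall n, BI n (v n)) by (intro n; apply (proj2_sig (vs n))).
    assert (Hvs : forall n, p n (v (S n)) = v n).
    { intro n. unfold v. simpl. apply (proj2 (proj2_sig (stepf n (vs n)))). }
    assert (xs : forall n, exists x, A x /\ p n x = v n /\ Bad n x) by (intro n; apply (Hv n n); auto).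
    assert (chain : forall m n, m <= n -> le (v m) (v n)).
    { intros m n Hmn. induction Hmn. apply le_refl. eapply le_trans; [exact IHHmn|].
      rewrite <- (Hvs m0). apply pdefl. }
    set (S' := fun y => exists n, y = v n).
    assert (Hdir : directed le S').
    { split. exists (v 0). exists 0; auto.
      intros x y [m ->] [n ->]. exists (v (Nat.max m n)). split. exists (Nat.max m n); auto.
      split; apply chain; lia. }
    destruct (dcpo S' Hdir) as [y Hy].
    assert (Hvy : forall n, le (v n) y) by (intro n; apply Hy; exists n; auto).
    assert (My : maximal le y).
    { intros w Hw.
      assert (Epw : forall n, p n w = v n).
      { intro n. destruct (xs n) as [x [Ax [Ex Bx]]].
        assert (Hle : le (p n x) (p n w)).
        { rewrite Ex. rewrite <- Ex at 1. rewrite <- (pidem n x). rewrite Ex. apply pmono.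
          eapply le_trans; eauto. }
        apply star in Hle; [|apply Ax]. congruence. }
      apply (lub_unique S'); auto. split.
      - intros s [n ->]. rewrite <- Epw. apply pdefl.
      - intros z Hz. apply (Hlub w). intros s [n ->]. rewrite Epw. apply Hz. exists n; auto. }
    assert (Ay : A y).
    { split; auto. intros d Ld. split; auto.
      apply (Hlub d). intros s [n ->]. destruct (xs n) as [x [Ax [Ex Bx]]].
      eapply le_trans; [|apply (Hvy n)]. rewrite <- Ex. apply pmono. apply (proj2 Ax d Ld). }
    destruct (Hcov y Ay) as [i Hi]. apply (HU i) in Hi. destruct Hi as [k [Uk [Ck Hk]]].
    destruct (Ck S' y Hdir Hy Hk) as [s [[n ->] Hks]].
    destruct (xs n) as [x [Ax [Ex Bx]]]. apply (Bx i). rewrite Ex.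
    eapply so_upper; [apply HU|exact Uk|exact Hks]. }
  destruct Claim as [n Hn]. destruct (pfin n) as [ln Hln].
  destruct (filter_ex (fun c => exists x, A x /\ c = p n x) ln) as [F HF].
  destruct (choose_list (fun c i => Uf i c) F) as [li Hli].
  { intros c Hc. apply HF in Hc. destruct Hc as [_ [x [Ax ->]]]. apply Hn; auto. }
  exists li. intros x Ax.
  assert (Hc : In (p n x) F) by (apply HF; split; [auto|exists x; auto]).
  destruct (Hli _ Hc) as [i [Hi Ui]]. exists i. split; auto.
  eapply so_upper; [apply HU|exact Ui|apply pdefl].
Qed.

Lemma gamma_closed C : (forall x, C x -> maximal le x) -> scott_closed le (gammaC le C).
Proof. intros HC x. split.
  - intro N. assert (H : exists c, C c /\ ~ le x c).
    { apply NNPP. intro N2. apply N. intros c Cc. split; auto. apply NNPP. intro. apply N2. eauto. }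
    destruct H as [c [Cc Nc]]. destruct (alg_sep _ _ Nc) as [k [Ck [Hk Nk]]].
    exists k. split; [|auto]. intro G. apply Nk. apply (G c Cc).
  - intros [k [Nk [Ck Hk]]] G. apply Nk. intros c Cc. split; auto. eapply le_trans; [exact Hk|]. apply (G c Cc).
Qed.

End Main.

Theorem theorem4p6 (Act : Type) (HAct : exists l : list Act, forall a, In a l)
  (D : Type) (le : D -> D -> Prop) (phi : D -> Act -> MD le)
  (Hsol : initial_solution phi) :
  (* well defined *)
  (forall C, KX le C -> LD le (gammaC le C)) /\
  (forall L, LD le L -> KX le (alphaL le L)) /\
  (* gamma monotone: C' ⊑ C'' (i.e. C'' ⊆ C') implies gamma C' ⊆ gamma C'' *)
  (forall C1 C2, KX le C1 -> KX le C2 -> (forall x, C2 x -> C1 x) ->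
     forall d, gammaC le C1 d -> gammaC le C2 d) /\
  (* alpha monotone: L1 ⊆ L2 implies alpha L1 ⊑ alpha L2 (i.e. alpha L2 ⊆ alpha L1) *)
  (forall L1 L2, LD le L1 -> LD le L2 -> (forall d, L1 d -> L2 d) ->
     forall x, alphaL le L2 x -> alphaL le L1 x) /\
  (forall L, LD le L -> forall d, L d -> gammaC le (alphaL le L) d) /\
  (forall C, KX le C -> forall x, C x -> alphaL le (gammaC le C) x).
Proof.
  destruct HAct as [la Hla].
  destruct Hsol as [bif [Hiso [Hsurj [bot [p [Hbot [Hp0 [HpS Hlub]]]]]]]].
  split; [|split; [|split; [|split; [|split]]]].
  - intros C [HC _]. unfold LD. eapply gamma_closed; eauto.
  - intros L HL. split.
    + intros x [Mx _]. exact Mx.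
    + eapply alpha_compact; eauto.
  - intros C1 C2 _ _ H21 d G x Cx. apply G. auto.
  - intros L1 L2 _ _ H12 x [Mx Hx]. split; auto.
  - intros L HL d Ld x [Mx Hx]. apply Hx. auto.
  - intros C [HC _] x Cx. split; [apply HC; auto|]. intros d G. apply G. auto.
Qed.
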